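(* Consider the dynamic panel logit AR(1) model with $T=3$: $(Y_0,X,A)$ has an arbitrary joint distribution with $Y_0\in\{0,1\}$, $X=(X_1,X_2,X_3)\in\mathbb{R}^{K\times 3}$, $A\in\mathbb{R}$, and conditionally on $(Y_0,X,A)$ the outcomes $Y=(Y_1,Y_2,Y_3)\in\{0,1\}^3$ satisfy, for $t\in\{1,2,3\}$, $$\Pr(Y_t=1\mid Y_0,\dots,Y_{t-1},X,A)=\frac{\exp(X_t'\beta_0+Y_{t-1}\gamma_0+A)}{1+\exp(X_t'\beta_0+Y_{t-1}\gamma_0+A)}$$ with true parameters $\beta_0\in\mathbb{R}^K$, $\gamma_0\in\mathbb{R}$. Let $x_{ts}=x_t-x_s$ and define the moment functions $$m_0^{(a)}(y,x,\beta,\gamma)=\begin{cases}\exp(x_{12}'\beta)&y=(0,1,0),\\ \exp(x_{13}'\beta-\gamma)&y=(0,1,1),\\ -1&(y_1,y_2)=(1,0),\\ \exp(x_{32}'\beta)-1&y=(1,1,0),\\0&\text{otherwise},\end{cases}\qquad m_0^{(b)}(y,x,\beta,\gamma)=\begin{cases}\exp(x_{23}'\beta)-1&y=(0,0,1),\\ -1&(y_1,y_2)=(0,1),\\ \exp(x_{31}'\beta)&y=(1,0,0),\\ \exp(\gamma+x_{21}'\beta)&y=(1,0,1),\\0&\text{otherwise},\end{cases}$$ $$m_1^{(a)}(y,x,\beta,\gamma)=\begin{cases}\exp(x_{12}'\beta+\gamma)&y=(0,1,0),\\ \exp(x_{13}'\beta)&y=(0,1,1),\\ -1&(y_1,y_2)=(1,0),\\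 \exp(x_{32}'\beta)-1&y=(1,1,0),\\0&\text{otherwise},\end{cases}\qquad m_1^{(b)}(y,x,\beta,\gamma)=\begin{cases}\exp(x_{23}'\beta)-1&y=(0,0,1),\\ -1&(y_1,y_2)=(0,1),\\ \exp(x_{31}'\beta-\gamma)&y=(1,0,0),\\ \exp(x_{21}'\beta)&y=(1,0,1),\\0&\text{otherwise}.\end{cases}$$ For $k\in\{1,\dots,K\}$ let $\mathcal{X}_{k,+}=\{x\in\mathbb{R}^{K\times3}: x_{k,1}\le x_{k,3}<x_{k,2}\text{ or }x_{k,1}<x_{k,3}\le x_{k,2}\}$ and $\mathcal{X}_{k,-}=\{x\in\mathbb{R}^{K\times3}: x_{k,1}\ge x_{k,3}>x_{k,2}\text{ or }x_{k,1}>x_{k,3}\ge x_{k,2}\}$, where $x_{k,t}$ is the $k$-th component of $x_t$; for $s\in\{-,+\}^K$ let $\mathcal{X}_s=\bigcap_{k=1}^K\mathcal{X}_{k,s_k}$, and let $\overline m^{(\xi)}_{y_0,s}(\beta,\gamma)=\mathbb{E}[m^{(\xi)}_{y_0}(Y,X,\beta,\gamma)\mid Y_0=y_0,X\in\mathcal{X}_s]$. Let $y_0\in\{0,1\}$ and $\xi\in\{a,b\}$, and assume that for all $s\in\{-,+\}^K$, $\Pr(Y_0=y_0,X\in\mathcal{X}_s)>0$ and $\overline m^{(\xi)}_{y_0,s}(\beta,\gamma)$ is well-defined. Then the solution $(\beta,\gamma)\in\mathbb{R}^K\times\mathbb{R}$ of $\overline m^{(\xi)}_{y_0,s}(\beta,\gamma)=0$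 for all $s\in\{-,+\}^K$ is unique and equals $(\beta_0,\gamma_0)$; that is, $\beta_0$ and $\gamma_0$ are point-identified.
   Context: Expectations are taken under the true data distribution (generated with $\beta_0,\gamma_0$), while the moment functions are evaluated at an arbitrary candidate $(\beta,\gamma)$. *)

(* Defs.v *)
From HB Require Import structures.
From mathcomp Require Import all_boot all_order all_algebra.
From mathcomp Require Import all_classical all_reals all_analysis.
Set Implicit Arguments. Unset Strict Implicit. Unset Printing Implicit Defensive.
Import Order.TTheory GRing.Theory Num.Theory.
Local Open Scope classical_set_scope.
Local Open Scope ring_scope.

Section Model.
Variable R : realType.
Variable K : nat.

(* periods 1,2,3 are the columns 0,1,2 of x : 'M_(K,3) *)
Definition p1 : 'I_3 := @Ordinal 3 0 isT.
Definition p2 : 'I_3 := @Ordinal 3 1 isT.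
Definition p3 : 'I_3 := @Ordinal 3 2 isT.

Definition xb (x : 'M[R]_(K,3)) (t : 'I_3) (beta : 'rV[R]_K) : R :=
  \sum_(k < K) x k t * beta 0 k.

Definition b2r (b : bool) : R := if b then 1 else 0.

Definition logistic (z : R) : R := expR z / (1 + expR z).

Definition pt (v : R) (yt : bool) : R :=
  if yt then logistic v else 1 - logistic v.

Definition condprob (beta0 : 'rV[R]_K) (gamma0 : R) (y0 : bool)
  (x : 'M[R]_(K,3)) (a : R) (y1 y2 y3 : bool) : R :=
  pt (xb x p1 beta0 + b2r y0 * gamma0 + a) y1 *
  pt (xb x p2 beta0 + b2r y1 * gamma0 + a) y2 *
  pt (xb x p3 beta0 + b2r y2 * gamma0 + a) y3.

Inductive xi_t := Xi_a | Xi_b.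

Definition moment (y0 : bool) (xi : xi_t) (y1 y2 y3 : bool)
  (x : 'M[R]_(K,3)) (beta : 'rV[R]_K) (gamma : R) : R :=
  let b1 := xb x p1 beta in let b2 := xb x p2 beta in let b3 := xb x p3 beta in
  match y0, xi with
  | false, Xi_a =>
      match y1, y2, y3 with
      | false, true, false => expR (b1 - b2)
      | false, true, true => expR (b1 - b3 - gamma)
      | true, false, _ => -1
      | true, true, false => expR (b3 - b2) - 1
      | _, _, _ => 0
      end
  | false, Xi_b =>
      match y1, y2, y3 with
      | false, false, true => expR (b2 - b3) - 1
      | false, true, _ => -1
      | true, false, false => expR (b3 - b1)
      | true, false, true => expR (gamma + (b2 - b1))
      | _, _, _ => 0
      end
  | true, Xi_a =>
      match y1, y2, y3 with
      | false, true, false => expR (b1 - b2 + gamma)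
      | false, true, true => expR (b1 - b3)
      | true, false, _ => -1
      | true, true, false => expR (b3 - b2) - 1
      | _, _, _ => 0
      end
  | true, Xi_b =>
      match y1, y2, y3 with
      | false, false, true => expR (b2 - b3) - 1
      | false, true, _ => -1
      | true, false, false => expR (b3 - b1 - gamma)
      | true, false, true => expR (b2 - b1)
      | _, _, _ => 0
      end
  end.

Definition Xplus (k : 'I_K) (x : 'M[R]_(K,3)) : Prop :=
  (x k p1 <= x k p3 < x k p2) \/ (x k p1 < x k p3 <= x k p2).
Definition Xminus (k : 'I_K) (x : 'M[R]_(K,3)) : Prop :=
  (x k p2 < x k p3 <= x k p1) \/ (x k p2 <= x k p3 < x k p1).

(* X_s, with s k = true meaning sign + *)
Definition Xs (s : 'I_K -> bool) : set 'M[R]_(K,3) :=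
  [set x | forall k, if s k then Xplus k x else Xminus k x].

Section Prob.
Variables (d : measure_display) (Omega : measurableType d).
Variables (P : probability Omega R).
Variables (Y0 : Omega -> bool) (X : Omega -> 'M[R]_(K,3)) (A : Omega -> R).
Variables (beta0 : 'rV[R]_K) (gamma0 : R).

Definition event (y0 : bool) (s : 'I_K -> bool) : set Omega :=
  [set w | Y0 w = y0 /\ Xs s (X w)].

Definition cond_moment (y0 : bool) (xi : xi_t) (beta : 'rV[R]_K) (gamma : R)
  (w : Omega) : R :=
  \sum_(y1 : bool) \sum_(y2 : bool) \sum_(y3 : bool)
    condprob beta0 gamma0 (Y0 w) (X w) (A w) y1 y2 y3 *
    moment y0 xi y1 y2 y3 (X w) beta gamma.

Definition mbar (y0 : bool) (xi : xi_t) (s : 'I_K -> bool)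
  (beta : 'rV[R]_K) (gamma : R) : R :=
  fine (\int[P]_(w in event y0 s) (cond_moment y0 xi beta gamma w)%:E) /
  fine (P (event y0 s)).

End Prob.
End Model.

(* Main.v *)
Require Import Defs.
From HB Require Import structures.
From mathcomp Require Import all_boot all_order all_algebra.
From mathcomp Require Import all_classical all_reals all_analysis.
From mathcomp Require Import ring lra.
Import Order.TTheory GRing.Theory Num.Theory.
Local Open Scope classical_set_scope.
Local Open Scope ring_scope.

Section S.
Variables (R : realType) (K : nat).
Implicit Types (x : 'M[R]_(K,3)) (beta : 'rV[R]_K).

Lemma term (a1 a2 a3 d : R) :
  (if 0 <= d then ((a1 <= a3 < a2) \/ (a1 < a3 <= a2))
   else ((a2 < a3 <= a1) \/ (a2 <= a3 < a1))) ->
  [/\ (a1-a2)*d <= 0, (a1-a3)*d <= 0, (a3-a2)*d <= 0 & d != 0 -> (a1-a2)*d < 0].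
Proof.
case: ifP => hd.
  have hs : d != 0 -> 0 < d by move=> hn; rewrite lt_neqAle eq_sym hn hd.
  by case=> /andP[h1 h2]; split => [|||/hs h]; nra.
have hd' : d < 0 by rewrite ltNge hd.
by case=> /andP[h1 h2]; split => [|||_]; nra.
Qed.

Definition S x (d : 'I_K -> R) t u := \sum_(k < K) (x k t - x k u) * d k.

Lemma sgn (d : 'I_K -> R) x : Xs (fun k => 0 <= d k) x ->
  [/\ S x d p1 p2 <= 0, S x d p1 p3 <= 0, S x d p3 p2 <= 0 &
      (exists k, d k != 0) -> S x d p1 p2 < 0].
Proof.
move=> Hx; have T k := @term (x k p1) (x k p2) (x k p3) (d k) (Hx k).
split; rewrite /S.
- by apply: sumr_le0 => k _; case: (T k).
- by apply: sumr_le0 => k _; case: (T k).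
- by apply: sumr_le0 => k _; case: (T k).
case=> k hk; rewrite (bigD1 k) //=.
have h1 : \sum_(j < K | j != k) (x j p1 - x j p2) * d j <= 0.
  by apply: sumr_le0 => j _; case: (T j).
case: (T k) => _ _ _ /(_ hk) h2; lra.
Qed.

Lemma SN x d t u : S x (fun k => - d k) t u = - S x d t u.
Proof. by rewrite /S -sumrN; apply: eq_bigr => k _; rewrite mulrN. Qed.

Lemma xb_diff x t u beta beta0 :
  (xb x t beta - xb x u beta) - (xb x t beta0 - xb x u beta0) =
  S x (fun k => beta 0 k - beta0 0 k) t u.
Proof.
rewrite /xb /S -!sumrB; apply: eq_bigr => k _; ring.
Qed.

Lemma comb3 (p1 p2 p3 u1 v1 u2 v2 u3 v3 : R) :
  0 < p1 -> 0 < p2 -> 0 < p3 -> u1 <= v1 -> u2 <= v2 -> u3 <= v3 ->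
  (u1 < v1 \/ u2 < v2 \/ u3 < v3) ->
  p1 * (expR u1 - expR v1) + p2 * (expR u2 - expR v2) + p3 * (expR u3 - expR v3) < 0.
Proof.
move=> h1 h2 h3 e1 e2 e3; rewrite -ler_expR in e1; rewrite -ler_expR in e2;
  rewrite -ler_expR in e3.
have q1 : p1 * (expR u1 - expR v1) <= 0.
  by apply: mulr_ge0_le0; [exact: ltW | rewrite subr_le0].
have q2 : p2 * (expR u2 - expR v2) <= 0.
  by apply: mulr_ge0_le0; [exact: ltW | rewrite subr_le0].
have q3 : p3 * (expR u3 - expR v3) <= 0.
  by apply: mulr_ge0_le0; [exact: ltW | rewrite subr_le0].
case=> [|[]]; rewrite -ltr_expR => h.
- have : p1 * (expR u1 - expR v1) < 0 by rewrite pmulr_rlt0 // subr_lt0. lra.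
- have : p2 * (expR u2 - expR v2) < 0 by rewrite pmulr_rlt0 // subr_lt0. lra.
- have : p3 * (expR u3 - expR v3) < 0 by rewrite pmulr_rlt0 // subr_lt0. lra.
Qed.

Lemma pt_gt0 (v : R) b : 0 < pt v b.
Proof.
rewrite /pt /logistic; have he := expR_gt0 v.
have h1 : 0 < 1 + expR v by lra.
case: b; first by rewrite divr_gt0.
rewrite subr_gt0 ltr_pdivrMr // mul1r; lra.
Qed.

Lemma condprob_gt0 beta0 (gamma0 : R) y0 x (a : R) y1 y2 y3 :
  0 < condprob beta0 gamma0 y0 x a y1 y2 y3.
Proof. by rewrite /condprob !mulr_gt0 ?pt_gt0. Qed.

Definition cm (beta0 : 'rV[R]_K) (gamma0 : R) (y0' y0 : bool) (xi : xi_t) x (a : R)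
  beta (gamma : R) : R :=
  \sum_(y1 : bool) \sum_(y2 : bool) \sum_(y3 : bool)
    condprob beta0 gamma0 y0' x a y1 y2 y3 * moment y0 xi y1 y2 y3 x beta gamma.

Lemma cm_zero beta0 gamma0 y0 xi x a : cm beta0 gamma0 y0 y0 xi x a beta0 gamma0 = 0.
Proof.
rewrite /cm !big_bool /=.
rewrite /condprob /pt /logistic /b2r.
have E1 := expR_gt0 (xb x p1 beta0).
have E2 := expR_gt0 (xb x p2 beta0).
have E3 := expR_gt0 (xb x p3 beta0).
have G := expR_gt0 gamma0.
have Al := expR_gt0 a.
case: y0; case: xi => /=; rewrite ?mul1r ?mul0r ?addr0 ?expRD ?expRN;
  field; rewrite ?lt0r_neq0 ?addr_gt0 ?mulr_gt0 ?ltr01 ?expR_gt0 //.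
Qed.

Definition delta beta beta0 (k : 'I_K) : R := beta 0 k - beta0 0 k.

Lemma xb_diff' x t u beta beta0 :
  (xb x t beta - xb x u beta) - (xb x t beta0 - xb x u beta0) =
  S x (delta beta beta0) t u.
Proof. exact: xb_diff. Qed.

Lemma exN (d : 'I_K -> R) : (exists k, d k != 0) -> exists k, - d k != 0.
Proof. by case=> k hk; exists k; rewrite oppr_eq0. Qed.

Lemma cm_sign beta0 gamma0 y0 xi beta gamma :
  ((exists k, delta beta beta0 k != 0) \/ gamma != gamma0) ->
  exists s : 'I_K -> bool, exists sg : bool, forall x a, Xs s x ->
    if sg then 0 < cm beta0 gamma0 y0 y0 xi x a beta gamma
    else cm beta0 gamma0 y0 y0 xi x a beta gamma < 0.
Proof.
move=> Hc.
case: y0; case: xi; case: (lerP gamma0 gamma) => hg.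
-
  exists (fun k => 0 <= - delta beta beta0 k); exists true => x a Hx.
  have [F12 F13 F32 Fs] := @sgn ((fun k => - delta beta beta0 k)) x Hx.
  rewrite !SN in F12 F13 F32 Fs. have {}Fs := fun h => Fs (@exN (delta beta beta0) h).
  have H12 := xb_diff' x p1 p2 beta beta0.
  have H13 := xb_diff' x p1 p3 beta beta0.
  have H32 := xb_diff' x p3 p2 beta beta0.
  have Z := cm_zero beta0 gamma0 true Xi_a x a.
  rewrite /cm !big_bool /= in Z *.
  have := @comb3 (condprob beta0 gamma0 true x a false true false) (condprob beta0 gamma0 true x a false true true) (condprob beta0 gamma0 true x a true true false) ((xb x p1 beta0) - (xb x p2 beta0) + gamma0) ((xb x p1 beta) - (xb x p2 beta) + gamma) ((xb x p1 beta0) - (xb x p3 beta0)) ((xb x p1 beta) - (xb x p3 beta)) ((xb x p3 beta0) - (xb x p2 beta0)) ((xb x p3 beta) - (xb x p2 beta))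
    (condprob_gt0 beta0 gamma0 true x a false true false) (condprob_gt0 beta0 gamma0 true x a false true true) (condprob_gt0 beta0 gamma0 true x a true true false)
    ltac:(lra) ltac:(lra) ltac:(lra)
    ltac:(case: Hc => [/Fs hs|hn]; [lra | have hg' : gamma0 < gamma by rewrite lt_neqAle eq_sym hn hg]; lra).
  move=> h; lra.
-
  exists (fun k => 0 <= delta beta beta0 k); exists false => x a Hx.
  have [F12 F13 F32 Fs] := @sgn (delta beta beta0) x Hx.
  have H12 := xb_diff' x p1 p2 beta beta0.
  have H13 := xb_diff' x p1 p3 beta beta0.
  have H32 := xb_diff' x p3 p2 beta beta0.
  have Z := cm_zero beta0 gamma0 true Xi_a x a.
  rewrite /cm !big_bool /= in Z *.
  have := @comb3 (condprob beta0 gamma0 true x a false true false) (condprob beta0 gamma0 true x a false true true) (condprob beta0 gamma0 true x a true true false) ((xb x p1 beta) - (xb x p2 beta) + gamma) ((xb x p1 beta0) - (xb x p2 beta0) + gamma0) ((xb x p1 beta) - (xb x p3 beta)) ((xb x p1 beta0) - (xb x p3 beta0)) ((xb x p3 beta) - (xb x p2 beta)) ((xb x p3 beta0) - (xb x p2 beta0))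
    (condprob_gt0 beta0 gamma0 true x a false true false) (condprob_gt0 beta0 gamma0 true x a false true true) (condprob_gt0 beta0 gamma0 true x a true true false)
    ltac:(lra) ltac:(lra) ltac:(lra) ltac:(lra).
  move=> h; lra.
-
  exists (fun k => 0 <= - delta beta beta0 k); exists false => x a Hx.
  have [F12 F13 F32 Fs] := @sgn ((fun k => - delta beta beta0 k)) x Hx.
  rewrite !SN in F12 F13 F32 Fs. have {}Fs := fun h => Fs (@exN (delta beta beta0) h).
  have H12 := xb_diff' x p1 p2 beta beta0.
  have H13 := xb_diff' x p1 p3 beta beta0.
  have H32 := xb_diff' x p3 p2 beta beta0.
  have Z := cm_zero beta0 gamma0 true Xi_b x a.
  rewrite /cm !big_bool /= in Z *.
  have := @comb3 (condprob beta0 gamma0 true x a false false true) (condprob beta0 gamma0 true x a true false false) (condprob beta0 gamma0 true x a true false true) ((xb x p2 beta) - (xb x p3 beta)) ((xb x p2 beta0) - (xb x p3 beta0)) ((xb x p3 beta) - (xb x p1 beta) - gamma) ((xb x p3 beta0) - (xb x p1 beta0) - gamma0) ((xb x p2 beta) - (xb x p1 beta)) ((xb x p2 beta0) - (xb x p1 beta0))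
    (condprob_gt0 beta0 gamma0 true x a false false true) (condprob_gt0 beta0 gamma0 true x a true false false) (condprob_gt0 beta0 gamma0 true x a true false true)
    ltac:(lra) ltac:(lra) ltac:(lra)
    ltac:(case: Hc => [/Fs hs|hn]; [lra | have hg' : gamma0 < gamma by rewrite lt_neqAle eq_sym hn hg]; lra).
  move=> h; lra.
-
  exists (fun k => 0 <= delta beta beta0 k); exists true => x a Hx.
  have [F12 F13 F32 Fs] := @sgn (delta beta beta0) x Hx.
  have H12 := xb_diff' x p1 p2 beta beta0.
  have H13 := xb_diff' x p1 p3 beta beta0.
  have H32 := xb_diff' x p3 p2 beta beta0.
  have Z := cm_zero beta0 gamma0 true Xi_b x a.
  rewrite /cm !big_bool /= in Z *.
  have := @comb3 (condprob beta0 gamma0 true x a false false true) (condprob beta0 gamma0 true x a true false false) (condprob beta0 gamma0 true x a true false true) ((xb x p2 beta0) - (xb x p3 beta0)) ((xb x p2 beta) - (xb x p3 beta)) ((xb x p3 beta0) - (xb x p1 beta0) - gamma0) ((xb x p3 beta) - (xb x p1 beta) - gamma) ((xb x p2 beta0) - (xb x p1 beta0)) ((xb x p2 beta) - (xb x p1 beta))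
    (condprob_gt0 beta0 gamma0 true x a false false true) (condprob_gt0 beta0 gamma0 true x a true false false) (condprob_gt0 beta0 gamma0 true x a true false true)
    ltac:(lra) ltac:(lra) ltac:(lra) ltac:(lra).
  move=> h; lra.
-
  exists (fun k => 0 <= delta beta beta0 k); exists false => x a Hx.
  have [F12 F13 F32 Fs] := @sgn (delta beta beta0) x Hx.
  have H12 := xb_diff' x p1 p2 beta beta0.
  have H13 := xb_diff' x p1 p3 beta beta0.
  have H32 := xb_diff' x p3 p2 beta beta0.
  have Z := cm_zero beta0 gamma0 false Xi_a x a.
  rewrite /cm !big_bool /= in Z *.
  have := @comb3 (condprob beta0 gamma0 false x a false true false) (condprob beta0 gamma0 false x a false true true) (condprob beta0 gamma0 false x a true true false) ((xb x p1 beta) - (xb x p2 beta)) ((xb x p1 beta0) - (xb x p2 beta0)) ((xb x p1 beta) - (xb x p3 beta) - gamma) ((xb x p1 beta0) - (xb x p3 beta0) - gamma0) ((xb x p3 beta) - (xb x p2 beta)) ((xb x p3 beta0) - (xb x p2 beta0))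
    (condprob_gt0 beta0 gamma0 false x a false true false) (condprob_gt0 beta0 gamma0 false x a false true true) (condprob_gt0 beta0 gamma0 false x a true true false)
    ltac:(lra) ltac:(lra) ltac:(lra)
    ltac:(case: Hc => [/Fs hs|hn]; [lra | have hg' : gamma0 < gamma by rewrite lt_neqAle eq_sym hn hg]; lra).
  move=> h; lra.
-
  exists (fun k => 0 <= - delta beta beta0 k); exists true => x a Hx.
  have [F12 F13 F32 Fs] := @sgn ((fun k => - delta beta beta0 k)) x Hx.
  rewrite !SN in F12 F13 F32 Fs. have {}Fs := fun h => Fs (@exN (delta beta beta0) h).
  have H12 := xb_diff' x p1 p2 beta beta0.
  have H13 := xb_diff' x p1 p3 beta beta0.
  have H32 := xb_diff' x p3 p2 beta beta0.
  have Z := cm_zero beta0 gamma0 false Xi_a x a.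
  rewrite /cm !big_bool /= in Z *.
  have := @comb3 (condprob beta0 gamma0 false x a false true false) (condprob beta0 gamma0 false x a false true true) (condprob beta0 gamma0 false x a true true false) ((xb x p1 beta0) - (xb x p2 beta0)) ((xb x p1 beta) - (xb x p2 beta)) ((xb x p1 beta0) - (xb x p3 beta0) - gamma0) ((xb x p1 beta) - (xb x p3 beta) - gamma) ((xb x p3 beta0) - (xb x p2 beta0)) ((xb x p3 beta) - (xb x p2 beta))
    (condprob_gt0 beta0 gamma0 false x a false true false) (condprob_gt0 beta0 gamma0 false x a false true true) (condprob_gt0 beta0 gamma0 false x a true true false)
    ltac:(lra) ltac:(lra) ltac:(lra) ltac:(lra).
  move=> h; lra.
-
  exists (fun k => 0 <= delta beta beta0 k); exists true => x a Hx.
  have [F12 F13 F32 Fs] := @sgn (delta beta beta0) x Hx.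
  have H12 := xb_diff' x p1 p2 beta beta0.
  have H13 := xb_diff' x p1 p3 beta beta0.
  have H32 := xb_diff' x p3 p2 beta beta0.
  have Z := cm_zero beta0 gamma0 false Xi_b x a.
  rewrite /cm !big_bool /= in Z *.
  have := @comb3 (condprob beta0 gamma0 false x a false false true) (condprob beta0 gamma0 false x a true false false) (condprob beta0 gamma0 false x a true false true) ((xb x p2 beta0) - (xb x p3 beta0)) ((xb x p2 beta) - (xb x p3 beta)) ((xb x p3 beta0) - (xb x p1 beta0)) ((xb x p3 beta) - (xb x p1 beta)) (gamma0 + ((xb x p2 beta0) - (xb x p1 beta0))) (gamma + ((xb x p2 beta) - (xb x p1 beta)))
    (condprob_gt0 beta0 gamma0 false x a false false true) (condprob_gt0 beta0 gamma0 false x a true false false) (condprob_gt0 beta0 gamma0 false x a true false true)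
    ltac:(lra) ltac:(lra) ltac:(lra)
    ltac:(case: Hc => [/Fs hs|hn]; [lra | have hg' : gamma0 < gamma by rewrite lt_neqAle eq_sym hn hg]; lra).
  move=> h; lra.
-
  exists (fun k => 0 <= - delta beta beta0 k); exists false => x a Hx.
  have [F12 F13 F32 Fs] := @sgn ((fun k => - delta beta beta0 k)) x Hx.
  rewrite !SN in F12 F13 F32 Fs. have {}Fs := fun h => Fs (@exN (delta beta beta0) h).
  have H12 := xb_diff' x p1 p2 beta beta0.
  have H13 := xb_diff' x p1 p3 beta beta0.
  have H32 := xb_diff' x p3 p2 beta beta0.
  have Z := cm_zero beta0 gamma0 false Xi_b x a.
  rewrite /cm !big_bool /= in Z *.
  have := @comb3 (condprob beta0 gamma0 false x a false false true) (condprob beta0 gamma0 false x a true false false) (condprob beta0 gamma0 false x a true false true) ((xb x p2 beta) - (xb x p3 beta)) ((xb x p2 beta0) - (xb x p3 beta0)) ((xb x p3 beta) - (xb x p1 beta)) ((xb x p3 beta0) - (xb x p1 beta0)) (gamma + ((xb x p2 beta) - (xb x p1 beta))) (gamma0 + ((xb x p2 beta0) - (xb x p1 beta0)))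
    (condprob_gt0 beta0 gamma0 false x a false false true) (condprob_gt0 beta0 gamma0 false x a true false false) (condprob_gt0 beta0 gamma0 false x a true false true)
    ltac:(lra) ltac:(lra) ltac:(lra) ltac:(lra).
  move=> h; lra.
Qed.

End S.

Section Meas.
Context (d : measure_display) (T : measurableType d) (R : realType).

Lemma int_pos_ne0 (mu : measure T R) (D : set T) (f : T -> R) :
  measurable D -> (0 < mu D)%E -> mu.-integrable D (fun w => (f w)%:E) ->
  (forall w, D w -> 0 < f w) -> fine (\int[mu]_(w in D) (f w)%:E)%E != 0.
Proof.
move=> mD muD fi fpos.
have fin := integrable_fin_num mD fi.
apply/negP => /eqP h0.
have I0 : (\int[mu]_(w in D) (f w)%:E = 0)%E by rewrite -(fineK fin) h0.
have : (\int[mu]_(w in D) `|(f w)%:E| = 0)%E.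
  rewrite -I0; apply: eq_integral => w /[1!inE] Dw.
  by rewrite gee0_abs // lee_fin ltW // fpos.
move/(ae_eq_integral_abs mu mD (measurable_int _ fi)) => [N [mN N0 sub]].
have DN : D `<=` N.
  move=> w Dw; apply: sub => /= /(_ Dw) hf.
  by move: (congr1 fine hf) (fpos w Dw) => /= ->; rewrite ltxx.
have h : (mu D <= mu N)%E := le_measure mu (mem_set mD) (mem_set mN) DN.
by rewrite N0 in h; rewrite (le_gtF h) in muD.
Qed.

Lemma int_neg_ne0 (mu : measure T R) (D : set T) (f : T -> R) :
  measurable D -> (0 < mu D)%E -> mu.-integrable D (fun w => (f w)%:E) ->
  (forall w, D w -> f w < 0) -> fine (\int[mu]_(w in D) (f w)%:E)%E != 0.
Proof.
move=> mD muD fi fneg.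
have fiN : mu.-integrable D (fun w => (- f w)%:E) by exact: (integrableN fi).
have := @int_pos_ne0 mu D (fun w => - f w) mD muD fiN.
have -> : (\int[mu]_(w in D) (- f w)%:E = - \int[mu]_(w in D) (f w)%:E)%E.
  have hp := integrable_pos_fin_num mD fi.
  by rewrite -integralN // fin_num_adde_defr.
rewrite fineN oppr_eq0; apply => w Dw; rewrite oppr_gt0; exact: fneg.
Qed.

Lemma mle (f g : T -> R) : measurable_fun setT f -> measurable_fun setT g ->
  measurable [set w | f w <= g w].
Proof. by move=> hf hg; have := measurable_fun_le measurableT hf hg; rewrite setTI. Qed.

Lemma mlt (f g : T -> R) : measurable_fun setT f -> measurable_fun setT g ->
  measurable [set w | f w < g w].
Proof.
move=> hf hg.
have -> : [set w | f w < g w] = ~` [set w | g w <= f w].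
  by apply/seteqP; split => w /=; rewrite ltNge => /negP.
exact/measurableC/mle.
Qed.

End Meas.

Lemma event_meas (R : realType) (K : nat) (d : measure_display) (Omega : measurableType d)
  (Y0 : Omega -> bool) (X : Omega -> 'M[R]_(K,3)) (y0 : bool) (s : 'I_K -> bool) :
  measurable [set w | Y0 w] ->
  (forall (k : 'I_K) (t : 'I_3), measurable_fun setT (fun w => X w k t)) ->
  measurable (event Y0 X y0 s).
Proof.
move=> mY mX.
have -> : event Y0 X y0 s = [set w | Y0 w = y0] `&`
   \bigcap_(k in [set: 'I_K]) [set w | if s k then Xplus k (X w) else Xminus k (X w)].
  apply/seteqP; split => w /=.
  - by case=> h1 h2; split => // k _; exact: h2.
  - by case=> h1 h2; split => // k; exact: h2.
apply: measurableI.
  case: y0.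
    by have -> : [set w | Y0 w = true] = [set w | Y0 w] by [].
  have -> : [set w | Y0 w = false] = ~` [set w | Y0 w].
    by apply/seteqP; split => w /=; case: (Y0 w).
  exact: measurableC.
apply: fin_bigcap_measurable; first exact: finite_finset.
move=> k _; case: (s k).
  have -> : [set w | Xplus k (X w)] =
    ([set w | X w k p1 <= X w k p3] `&` [set w | X w k p3 < X w k p2]) `|`
    ([set w | X w k p1 < X w k p3] `&` [set w | X w k p3 <= X w k p2]).
    by apply/seteqP; split => w /=; rewrite /Xplus; case=> [/andP|/andP]; tauto.
  by apply: measurableU; apply: measurableI; (apply: mle || apply: mlt).
have -> : [set w | Xminus k (X w)] =
  ([set w | X w k p2 < X w k p3] `&` [set w | X w k p3 <= X w k p1]) `|`
  ([set w | X w k p2 <= X w k p3] `&` [set w | X w k p3 < X w k p1]).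
  by apply/seteqP; split => w /=; rewrite /Xminus; case=> [/andP|/andP]; tauto.
by apply: measurableU; apply: measurableI; (apply: mle || apply: mlt).
Qed.

Theorem theorem1 (R : realType) (K : nat) (d : measure_display)
  (Omega : measurableType d) (P : probability Omega R)
  (Y0 : Omega -> bool) (X : Omega -> 'M[R]_(K,3)) (A : Omega -> R)
  (beta0 : 'rV[R]_K) (gamma0 : R) (y0 : bool) (xi : xi_t) :
  measurable [set w | Y0 w] ->
  (forall (k : 'I_K) (t : 'I_3), measurable_fun setT (fun w => X w k t)) ->
  measurable_fun setT A ->
  (forall s : 'I_K -> bool, (0 < P (event Y0 X y0 s))%E) ->
  (forall (s : 'I_K -> bool) (beta : 'rV[R]_K) (gamma : R),
      P.-integrable (event Y0 X y0 s)
        (fun w => (cond_moment Y0 X A beta0 gamma0 y0 xi beta gamma w)%:E)) ->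
  forall (beta : 'rV[R]_K) (gamma : R),
    (forall s : 'I_K -> bool,
        mbar P Y0 X A beta0 gamma0 y0 xi s beta gamma = 0) <->
    (beta = beta0 /\ gamma = gamma0).
Proof.
move=> mY0 mX mA Hpos Hint beta gamma; split; last first.
  case=> -> -> s; rewrite /mbar.
  have -> : (\int[P]_(w in event Y0 X y0 s)
      (cond_moment Y0 X A beta0 gamma0 y0 xi beta0 gamma0 w)%:E)%E = 0%E.
    apply: integral0_eq => w [Yw _].
    have := @cm_zero R K beta0 gamma0 y0 xi (X w) (A w).
    by rewrite /cm /cond_moment Yw => ->.
  by rewrite /= mul0r.
move=> H.
case: (pselect (beta = beta0 /\ gamma = gamma0)) => // hne; exfalso.
have Hc : (exists k, delta R K beta beta0 k != 0) \/ gamma != gamma0.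
  case: (eqVneq gamma gamma0) => hg; last by right.
  left; apply: contrapT => hk; apply: hne; split => //.
  apply/rowP => k; apply/eqP; rewrite -subr_eq0; apply: contrapT => hk'.
  by apply: hk; exists k; apply/negP.
have [s [sg Hs]] := @cm_sign R K beta0 gamma0 y0 xi beta gamma Hc.
have mE : measurable (event Y0 X y0 s) := @event_meas R K d Omega Y0 X y0 s mY0 mX.
have PE : 0 < fine (P (event Y0 X y0 s)).
  apply: fine_gt0; rewrite Hpos /=.
  exact: (le_lt_trans (probability_le1 P mE) (ltry 1)).
have HI : fine (\int[P]_(w in event Y0 X y0 s)
      (cond_moment Y0 X A beta0 gamma0 y0 xi beta gamma w)%:E)%E != 0.
  case: sg Hs => Hs.
  - apply: (@int_pos_ne0 _ _ _ _ _ _ mE (Hpos s) (Hint s beta gamma)) => w [Yw Xw].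
    have := Hs (X w) (A w) Xw.
    by rewrite /cm /cond_moment Yw.
  - apply: (@int_neg_ne0 _ _ _ _ _ _ mE (Hpos s) (Hint s beta gamma)) => w [Yw Xw].
    have := Hs (X w) (A w) Xw.
    by rewrite /cm /cond_moment Yw.
move/eqP: (H s); rewrite /mbar mulf_eq0 invr_eq0 (gt_eqF PE) orbF.
by rewrite (negPf HI).
Qed.
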